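(* Let $(M,\Delta,S,\varepsilon)$ be a weak Kac algebra, let $I_s=\{y\in M: yx=y\,\varepsilon_s(x)\ \forall x\in M\}$ and $I_t=\{y\in M: xy=\varepsilon_t(x)\,y\ \forall x\in M\}$. Then $I_s\cap I_t=\{y\in M: y=p_\varepsilon\, y\, p_\varepsilon\}$, where $p_\varepsilon$ is the support of $\varepsilon$.
   Context: All algebras are finite-dimensional over $\mathbb{C}$; $\varsigma$ denotes the flip and $\mu(x\otimes y)=xy$. A weak Kac algebra is a quadruple $(M,\Delta,S,\varepsilon)$ where $M$ is a finite-dimensional $C^*$-algebra; $\Delta:M\to M\otimes M$ is an injective, not necessarily unital, $*$-homomorphism with $(\Delta\otimes\mathrm{id})\Delta=(\mathrm{id}\otimes\Delta)\Delta$; $S:M\to M$ is a linear, unital, antimultiplicative, $*$-preserving bijection with $S^2=\mathrm{id}$ and $(S\otimes S)\circ\Delta=\varsigma\circ\Delta\circ S$; and $\varepsilon:M\to\mathbb{C}$ is linear with $(\varepsilon\otimes\mathrm{id})\Delta=(\mathrm{id}\otimes\varepsilon)\Delta=\mathrm{id}$, $\varepsilon\circ S=\varepsilon$, $\varepsilon(x^* )=\overline{\varepsilon(x)}$, $(\varepsilon\otimes\varepsilon)((x\otimes1)e(1\otimes y))=\varepsilon(xy)$ for all $x,y$, where $e:=\Delta(1)$, and $(\varepsilon_s\otimes\mathrm{id})\Delta(x)=(1\otimes x)e$ for all $x$, where $\varepsilon_s:=\mu(S\otimes\mathrm{id})\Delta$; also $\varepsilon_t:=\mu(\mathrm{id}\otimes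 S)\Delta$. The functional $\varepsilon$ is positive on $M$; its support $p_\varepsilon$ is the smallest projection $p\in M$ with $\varepsilon(1-p)=0$, equivalently the minimal nonzero projection $p$ with $\varepsilon(xp)=\varepsilon(px)=\varepsilon(x)$ for all $x\in M$. *)

(* Defs.v *)
(* Finite-dimensional C*-algebras are modelled concretely as
   unital *-subalgebras of a full matrix algebra 'M[CC]_n over the complex
   numbers CC := R[i] (R = the classical real numbers of Stdlib, as an rcfType),
   with * = conjugate transpose.  The (C*-)tensor product M (x) M is realized
   inside 'M_(n*n) via the Kronecker product  *t  (mathcomp real_closed/mxtens). *)
From HB Require Import structures.
From mathcomp Require Import all_boot all_order all_algebra.
From mathcomp Require Import complex mxtens.
From mathcomp Require Import Rstruct.

Set Implicit Arguments.
Unset Strict Implicit.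
Unset Printing Implicit Defensive.

Import Order.TTheory GRing.Theory Num.Theory.
Local Open Scope ring_scope.

Definition CC : numClosedFieldType := (Rdefinitions.R)[i].

Definition mxstar m (A : 'M[CC]_m) : 'M[CC]_m := (map_mx Num.conj A)^T.

(* index of the pair (i,k) in 'I_(n*n), compatible with the Kronecker product:
   (A *t B) (tidx i k) (tidx j l) = A i j * B k l *)
Definition tidx n (i k : 'I_n) : 'I_(n * n) := mxtens_index (i, k).

(* Linear extension to 'M_n (x) 'M_n ~ 'M_(n*n) of a bilinear map h:
   T = \sum T_(ik,jl) E_ij (x) E_kl  |->  \sum T_(ik,jl) h E_ij E_kl. *)
Definition tbil n (V : lmodType CC) (h : 'M[CC]_n -> 'M[CC]_n -> V)
    (T : 'M[CC]_(n * n)) : V :=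
  \sum_(i < n) \sum_(j < n) \sum_(k < n) \sum_(l < n)
     T (tidx i k) (tidx j l) *: h (delta_mx i j) (delta_mx k l).

Definition tbils n (h : 'M[CC]_n -> 'M[CC]_n -> CC) (T : 'M[CC]_(n * n)) : CC :=
  \sum_(i < n) \sum_(j < n) \sum_(k < n) \sum_(l < n)
     T (tidx i k) (tidx j l) * h (delta_mx i j) (delta_mx k l).

Definition tmap n p q (f : 'M[CC]_n -> 'M[CC]_p) (g : 'M[CC]_n -> 'M[CC]_q)
    (T : 'M[CC]_(n * n)) : 'M[CC]_(p * q) :=
  tbil (fun a b => f a *t g b) T.

Definition tflip n (T : 'M[CC]_(n * n)) : 'M[CC]_(n * n) :=
  tbil (fun a b => b *t a) T.

Definition tmul n (f g : 'M[CC]_n -> 'M[CC]_n) (T : 'M[CC]_(n * n)) : 'M[CC]_n :=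
  tbil (fun a b => f a *m g b) T.

Definition tfunl n (phi : 'M[CC]_n -> CC) (T : 'M[CC]_(n * n)) : 'M[CC]_n :=
  tbil (fun a b => phi a *: b) T.
Definition tfunr n (phi : 'M[CC]_n -> CC) (T : 'M[CC]_(n * n)) : 'M[CC]_n :=
  tbil (fun a b => phi b *: a) T.

Definition tassoc n (T : 'M[CC]_(n * (n * n))) : 'M[CC]_(n * n * n) :=
  castmx (mulnA n n n, mulnA n n n) T.

Definition in_tens n (M : 'M[CC]_n -> Prop) (T : 'M[CC]_(n * n)) : Prop :=
  exists k (a b : 'I_k -> 'M[CC]_n),
    (forall r, M (a r) /\ M (b r)) /\ T = \sum_(r < k) (a r *t b r).

Definition eps_s n (Delta : 'M[CC]_n -> 'M[CC]_(n * n)) (S : 'M[CC]_n -> 'M[CC]_n)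
    (x : 'M[CC]_n) : 'M[CC]_n := tmul S id (Delta x).
Definition eps_t n (Delta : 'M[CC]_n -> 'M[CC]_(n * n)) (S : 'M[CC]_n -> 'M[CC]_n)
    (x : 'M[CC]_n) : 'M[CC]_n := tmul id S (Delta x).

Definition star_subalg n (M : 'M[CC]_n -> Prop) : Prop :=
  [/\ M 0, M 1%:M,
      (forall a x y, M x -> M y -> M (a *: x + y)),
      (forall x y, M x -> M y -> M (x *m y)) &
      (forall x, M x -> M (mxstar x))].

Definition lin_map n p (f : 'M[CC]_n -> 'M[CC]_p) : Prop :=
  forall (a : CC) x y, f (a *: x + y) = a *: f x + f y.
Definition lin_fun n (f : 'M[CC]_n -> CC) : Prop :=
  forall (a : CC) x y, f (a *: x + y) = a * f x + f y.

(* Weak Kac algebra (M, Delta, S, eps).  Delta, S, eps are given as linear maps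
   on the ambient 'M_n (any linear map on M extends linearly); all axioms are
   required on M only. *)
Record weak_kac n (M : 'M[CC]_n -> Prop) (Delta : 'M[CC]_n -> 'M[CC]_(n * n))
    (S : 'M[CC]_n -> 'M[CC]_n) (eps : 'M[CC]_n -> CC) : Prop := WeakKac {
  wk_M : star_subalg M;
  wk_Delta_lin : lin_map Delta;
  wk_Delta_range : forall x, M x -> in_tens M (Delta x);
  wk_Delta_inj : forall x y, M x -> M y -> Delta x = Delta y -> x = y;
  wk_Delta_mul : forall x y, M x -> M y -> Delta (x *m y) = Delta x *m Delta y;
  wk_Delta_star : forall x, M x -> Delta (mxstar x) = mxstar (Delta x);
  wk_coassoc : forall x, M x ->
     tmap Delta id (Delta x) = tassoc (tmap id Delta (Delta x));
  wk_S_lin : lin_map S;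
  wk_S_range : forall x, M x -> M (S x);
  wk_S_bij : forall y, M y -> exists2 x, M x & S x = y;
  wk_S_unital : S 1%:M = 1%:M;
  wk_S_antimul : forall x y, M x -> M y -> S (x *m y) = S y *m S x;
  wk_S_star : forall x, M x -> S (mxstar x) = mxstar (S x);
  wk_S_invol : forall x, M x -> S (S x) = x;
  wk_S_Delta : forall x, M x -> tmap S S (Delta x) = tflip (Delta (S x));
  wk_eps_lin : lin_fun eps;
  wk_eps_counitl : forall x, M x -> tfunl eps (Delta x) = x;
  wk_eps_counitr : forall x, M x -> tfunr eps (Delta x) = x;
  wk_eps_S : forall x, M x -> eps (S x) = eps x;
  wk_eps_star : forall x, M x -> eps (mxstar x) = Num.conj (eps x);
  wk_eps_mul : forall x y, M x -> M y ->
     tbils (fun a b => eps a * eps b)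
       ((x *t (1%:M : 'M[CC]_n)) *m Delta 1%:M *m ((1%:M : 'M[CC]_n) *t y))
     = eps (x *m y);
  wk_eps_s : forall x, M x ->
     tmap (eps_s Delta S) id (Delta x) = ((1%:M : 'M[CC]_n) *t x) *m Delta 1%:M
}.

Definition is_proj n (M : 'M[CC]_n -> Prop) (p : 'M[CC]_n) : Prop :=
  [/\ M p, p *m p = p & mxstar p = p].

(* p is the support of eps: the smallest projection p of M with eps(1-p) = 0
   (order on projections: p <= q iff p q = p) *)
Definition is_support n (M : 'M[CC]_n -> Prop) (eps : 'M[CC]_n -> CC)
    (p : 'M[CC]_n) : Prop :=
  [/\ is_proj M p, eps (1%:M - p) = 0 &
      forall q, is_proj M q -> eps (1%:M - q) = 0 -> p *m q = p].

Definition in_Is n (M : 'M[CC]_n -> Prop) Delta S (y : 'M[CC]_n) : Prop :=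
  M y /\ forall x, M x -> y *m x = y *m eps_s Delta S x.
Definition in_It n (M : 'M[CC]_n -> Prop) Delta S (y : 'M[CC]_n) : Prop :=
  M y /\ forall x, M x -> x *m y = eps_t Delta S x *m y.

(* Main.v *)
Require Import Defs.
From HB Require Import structures.
From mathcomp Require Import all_boot all_order all_algebra.
From mathcomp Require Import complex mxtens.
From mathcomp Require Import Rstruct.
From mathcomp Require Import ring.
Set Implicit Arguments.
Unset Strict Implicit.
Unset Printing Implicit Defensive.
Import Order.TTheory GRing.Theory Num.Theory.
Local Open Scope ring_scope.
Section Lin.
Variables (U V : lmodType CC).
Definition linP (f : U -> V) := forall a x y, f (a *: x + y) = a *: f x + f y.
Variable f : U -> V.
Hypothesis Hf : linP f.
Lemma linP0 : f 0 = 0.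
Proof.
have := Hf 1 0 0; rewrite scaler0 addr0 scale1r.
by move=> /(congr1 (fun z => z - f 0)); rewrite addrK subrr.
Qed.
Lemma linPD x y : f (x + y) = f x + f y.
Proof. by have := Hf 1 x y; rewrite !scale1r. Qed.
Lemma linPZ a x : f (a *: x) = a *: f x.
Proof. by have := Hf a x 0; rewrite !addr0 linP0 addr0. Qed.
Lemma linPN x : f (- x) = - f x.
Proof. by rewrite -scaleN1r linPZ scaleN1r. Qed.
Lemma linPB x y : f (x - y) = f x - f y.
Proof. by rewrite linPD linPN. Qed.
Lemma linP_sum I (r : seq I) (P : pred I) (F : I -> U) :
  f (\sum_(i <- r | P i) F i) = \sum_(i <- r | P i) f (F i).
Proof. exact: (big_morph f linPD linP0). Qed.
End Lin.

Section LinF.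
Variable U : lmodType CC.
Definition linS (f : U -> CC) := forall (a : CC) x y, f (a *: x + y) = a * f x + f y.
Variable f : U -> CC.
Hypothesis Hf : linS f.
Lemma linS0 : f 0 = 0.
Proof.
have := Hf 1 0 0; rewrite scaler0 addr0 mul1r.
by move=> /(congr1 (fun z => z - f 0)); rewrite addrK subrr.
Qed.
Lemma linSD x y : f (x + y) = f x + f y.
Proof. by have := Hf 1 x y; rewrite scale1r mul1r. Qed.
Lemma linSZ a x : f (a *: x) = a * f x.
Proof. by have := Hf a x 0; rewrite !addr0 linS0 addr0. Qed.
Lemma linSN x : f (- x) = - f x.
Proof. by rewrite -scaleN1r linSZ mulN1r. Qed.
Lemma linSB x y : f (x - y) = f x - f y.
Proof. by rewrite linSD linSN. Qed.
Lemma linS_sum I (r : seq I) (P : pred I) (F : I -> U) :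
  f (\sum_(i <- r | P i) F i) = \sum_(i <- r | P i) f (F i).
Proof. exact: (big_morph f linSD linS0). Qed.
End LinF.

Lemma lin_funS n (f : 'M[CC]_n -> CC) : lin_fun f -> linS f.
Proof. by []. Qed.
Lemma lin_mapP n p (f : 'M[CC]_n -> 'M[CC]_p) : lin_map f -> linP f.
Proof. by []. Qed.

Section Tens.
Variable n : nat.
Local Notation MM := 'M[CC]_n.

Definition bil (V : lmodType CC) (h : MM -> MM -> V) :=
  (forall b, linP (fun a => h a b)) /\ (forall a, linP (h a)).
Definition bilS (h : MM -> MM -> CC) :=
  (forall b, linS (fun a => h a b)) /\ (forall a, linS (h a)).

Lemma tbil_lin (V : lmodType CC) (h : MM -> MM -> V) : linP (tbil h).
Proof.
move=> a T T'.
rewrite /tbil scaler_sumr -big_split; apply eq_bigr => i _.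
rewrite scaler_sumr -big_split; apply eq_bigr => j _.
rewrite scaler_sumr -big_split; apply eq_bigr => k _.
rewrite scaler_sumr -big_split; apply eq_bigr => l _.
by rewrite !mxE scalerDl scalerA.
Qed.

Lemma tbils_lin (h : MM -> MM -> CC) : linS (tbils h).
Proof.
move=> a T T'.
rewrite /tbils mulr_sumr -big_split; apply eq_bigr => i _.
rewrite mulr_sumr -big_split; apply eq_bigr => j _.
rewrite mulr_sumr -big_split; apply eq_bigr => k _.
rewrite mulr_sumr -big_split; apply eq_bigr => l _.
by rewrite !mxE mulrDl mulrA.
Qed.

Lemma tbil_tens (V : lmodType CC) (h : MM -> MM -> V) (A B : MM) :
  bil h -> tbil h (A *t B) = h A B.
Proof.
move=> [hl hr].
rewrite {2}(matrix_sum_delta A) (linP_sum (hl _)).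
apply eq_bigr => i _; rewrite (linP_sum (hl _)); apply eq_bigr => j _.
rewrite (linPZ (hl _)) {2}(matrix_sum_delta B) (linP_sum (hr _)) scaler_sumr.
apply eq_bigr => k _; rewrite (linP_sum (hr _)) scaler_sumr; apply eq_bigr => l _.
by rewrite (linPZ (hr _)) scalerA /tidx tensmxE.
Qed.

Lemma tbils_tens (h : MM -> MM -> CC) (A B : MM) :
  bilS h -> tbils h (A *t B) = h A B.
Proof.
move=> [hl hr].
rewrite {2}(matrix_sum_delta A) (linS_sum (hl _)).
apply eq_bigr => i _; rewrite (linS_sum (hl _)); apply eq_bigr => j _.
rewrite (linSZ (hl _)) {2}(matrix_sum_delta B) (linS_sum (hr _)) mulr_sumr.
apply eq_bigr => k _; rewrite (linS_sum (hr _)) mulr_sumr; apply eq_bigr => l _.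
by rewrite (linSZ (hr _)) mulrA /tidx tensmxE.
Qed.

Lemma tbil_sum (V : lmodType CC) (h : MM -> MM -> V) k (a b : 'I_k -> MM) :
  bil h -> tbil h (\sum_(r < k) a r *t b r) = \sum_(r < k) h (a r) (b r).
Proof.
move=> hb; rewrite (linP_sum (@tbil_lin V h)); apply eq_bigr => r _.
exact: tbil_tens.
Qed.

Lemma tbils_sum (h : MM -> MM -> CC) k (a b : 'I_k -> MM) :
  bilS h -> tbils h (\sum_(r < k) a r *t b r) = \sum_(r < k) h (a r) (b r).
Proof.
move=> hb; rewrite (linS_sum (@tbils_lin h)); apply eq_bigr => r _.
exact: tbils_tens.
Qed.

Lemma tensmxDl m1 m2 p1 p2 (a : CC) (A A' : 'M[CC]_(m1, m2)) (B : 'M[CC]_(p1, p2)) :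
  (a *: A + A') *t B = a *: (A *t B) + A' *t B.
Proof. by apply/matrixP => i j; rewrite !mxE mulrDl mulrA. Qed.

Lemma tensmxDr m1 m2 p1 p2 (a : CC) (A : 'M[CC]_(m1, m2)) (B B' : 'M[CC]_(p1, p2)) :
  A *t (a *: B + B') = a *: (A *t B) + A *t B'.
Proof. by apply/matrixP => i j; rewrite !mxE mulrDr mulrCA. Qed.

End Tens.
Section Star.
Variable m : nat.
Local Notation MM := 'M[CC]_m.
Lemma mxstarM (A B : MM) : mxstar (A *m B) = mxstar B *m mxstar A.
Proof. by rewrite /mxstar map_mxM trmx_mul. Qed.
Lemma mxstarK (A : MM) : mxstar (mxstar A) = A.
Proof. by apply/matrixP => i j; rewrite !mxE conjCK. Qed.
Lemma mxstar_lin (a : CC) (A B : MM) : mxstar (a *: A + B) = Num.conj a *: mxstar A + mxstar B.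
Proof. by apply/matrixP => i j; rewrite !mxE rmorphD rmorphM. Qed.
Lemma mxstar1 : mxstar (1%:M : MM) = 1%:M.
Proof. by rewrite /mxstar map_mx1 trmx1. Qed.
End Star.

Section Tens2.
Variable n : nat.
Local Notation MM := 'M[CC]_n.

Lemma mxstar_tens (A B : MM) : mxstar (A *t B) = mxstar A *t mxstar B.
Proof. by rewrite /mxstar map_mxT trmx_tens. Qed.

Lemma mxtens_index_eq m p (i j : 'I_m) (k l : 'I_p) :
  (mxtens_index (i, k) == mxtens_index (j, l)) = (i == j) && (k == l).
Proof. by rewrite (inj_eq (can_inj (@mxtens_indexK _ _))) xpair_eqE. Qed.

Lemma tens11 : (1%:M : MM) *t (1%:M : MM) = 1%:M.
Proof.
apply/matrixP => x y.
case: (mxtens_indexP x) => i k; case: (mxtens_indexP y) => j l.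
by rewrite tensmxE !mxE mxtens_index_eq; case: (i == j); case: (k == l);
  rewrite ?mulr1n ?mulr0n ?mulr1 ?mulr0.
Qed.

Lemma tassoc_tens (A B C : MM) : tassoc (A *t (B *t C)) = (A *t B) *t C.
Proof.
apply/matrixP => x y.
case: (mxtens_indexP x) => I l; case: (mxtens_indexP I) => i k.
case: (mxtens_indexP y) => J l'; case: (mxtens_indexP J) => j k'.
rewrite /tassoc castmxE !tensmxE.
have -> : cast_ord (esym (mulnA n n n)) (mxtens_index (mxtens_index (i, k), l))
   = mxtens_index (i, mxtens_index (k, l)).
  by apply: val_inj => /=; rewrite mulnDl -mulnA addnA.
have -> : cast_ord (esym (mulnA n n n)) (mxtens_index (mxtens_index (j, k'), l'))
   = mxtens_index (j, mxtens_index (k', l')).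
  by apply: val_inj => /=; rewrite mulnDl -mulnA addnA.
by rewrite !tensmxE mulrA.
Qed.

Definition sl3 (lam : MM -> CC) (T : 'M[CC]_(n * n * n)) : 'M[CC]_(n * n) :=
  \matrix_(I, J) \sum_(l < n) \sum_(l' < n)
     T (mxtens_index (I, l)) (mxtens_index (J, l')) * lam (delta_mx l l').

Lemma sl3_lin lam : linP (sl3 lam).
Proof.
move=> a T T'; apply/matrixP => I J; rewrite /sl3 !mxE mulr_sumr -big_split.
apply: eq_bigr => l _; rewrite mulr_sumr -big_split; apply: eq_bigr => l' _.
by rewrite !mxE mulrDl mulrA.
Qed.

Lemma sl3_tens lam (X : 'M[CC]_(n * n)) (d : MM) :
  linS lam -> sl3 lam (X *t d) = lam d *: X.
Proof.
move=> hl; apply/matrixP => I J; rewrite /sl3 !mxE.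
rewrite [in RHS](matrix_sum_delta d) (linS_sum hl) mulr_suml; apply: eq_bigr => l _.
rewrite (linS_sum hl) mulr_suml; apply: eq_bigr => l' _.
rewrite tensmxE (linSZ hl); ring.
Qed.

End Tens2.
Section WK.
Variables (n : nat) (M : 'M[CC]_n -> Prop) (Delta : 'M[CC]_n -> 'M[CC]_(n * n))
  (S : 'M[CC]_n -> 'M[CC]_n) (eps : 'M[CC]_n -> CC).
Hypothesis W : weak_kac M Delta S eps.
Local Notation MM := 'M[CC]_n.
Local Notation e := (Delta 1%:M).
Local Notation es := (eps_s Delta S).
Local Notation et := (eps_t Delta S).

Lemma M0 : M 0. Proof. by case: (wk_M W). Qed.
Lemma M1 : M 1%:M. Proof. by case: (wk_M W). Qed.
Lemma Mlin a x y : M x -> M y -> M (a *: x + y). Proof. by case: (wk_M W) => _ _ H _ _; apply: H. Qed.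
Lemma Mmul x y : M x -> M y -> M (x *m y). Proof. by case: (wk_M W) => _ _ _ H _; apply: H. Qed.
Lemma Mstar x : M x -> M (mxstar x). Proof. by case: (wk_M W) => _ _ _ _ H; apply: H. Qed.
Lemma MD x y : M x -> M y -> M (x + y). Proof. by move=> hx hy; rewrite -[x]scale1r; apply: Mlin. Qed.
Lemma MZ a x : M x -> M (a *: x). Proof. by move=> hx; rewrite -[_ *: _]addr0; apply: Mlin => //; apply: M0. Qed.
Lemma MN x : M x -> M (- x). Proof. by move=> hx; rewrite -scaleN1r; apply: MZ. Qed.
Lemma MB x y : M x -> M y -> M (x - y). Proof. by move=> hx hy; apply: MD => //; apply: MN. Qed.
Lemma Msum I (r : seq I) (P : pred I) (F : I -> MM) :
  (forall i, P i -> M (F i)) -> M (\sum_(i <- r | P i) F i).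
Proof.
move=> H; elim/big_rec: _ => [|i x Pi Mx]; first exact: M0.
by apply: MD => //; apply: H.
Qed.

Lemma Dlin : linP Delta. Proof. exact: (wk_Delta_lin W). Qed.
Lemma Slin : linP S. Proof. exact: (wk_S_lin W). Qed.
Lemma elin : linS eps. Proof. exact: (wk_eps_lin W). Qed.
Lemma linP_id (V : lmodType CC) : linP (@id V). Proof. by []. Qed.
Lemma linP_comp (U V X : lmodType CC) (f : V -> X) (g : U -> V) :
  linP f -> linP g -> linP (f \o g).
Proof. by move=> hf hg a x y /=; rewrite hg hf. Qed.

Lemma bil_tmap p q (f : MM -> 'M[CC]_p) (g : MM -> 'M[CC]_q) : linP f -> linP g -> bil (fun a b => f a *t g b).
Proof.
move=> hf hg; split => [b|a] c x y /=; first by rewrite hf tensmxDl.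
by rewrite hg tensmxDr.
Qed.
Lemma bil_tmul (f g : MM -> MM) : linP f -> linP g -> bil (fun a b => f a *m g b).
Proof.
move=> hf hg; split => [b|a] c x y /=; first by rewrite hf mulmxDl scalemxAl.
by rewrite hg mulmxDr scalemxAr.
Qed.
Lemma bil_flip : bil (fun a b : MM => b *t a).
Proof. by split => [b|a] c x y /=; rewrite ?tensmxDl ?tensmxDr. Qed.
Lemma bil_funl (phi : MM -> CC) : linS phi -> bil (fun a b => phi a *: b).
Proof.
move=> hp; split => [b|a] c x y /=; first by rewrite hp scalerDl scalerA.
by rewrite scalerDr !scalerA mulrC.
Qed.
Lemma bil_funr (phi : MM -> CC) : linS phi -> bil (fun a b => phi b *: a).
Proof.
move=> hp; split => [b|a] c x y /=; last by rewrite hp scalerDl scalerA.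
by rewrite scalerDr !scalerA mulrC.
Qed.
Lemma bilS_mul (f g : MM -> CC) : linS f -> linS g -> bilS (fun a b => f a * g b).
Proof.
move=> hf hg; split => [b|a] c x y /=; first by rewrite hf mulrDl mulrA.
by rewrite hg mulrDr mulrCA.
Qed.

Lemma repr x : M x -> exists k (a b : 'I_k -> MM),
  (forall r, M (a r) /\ M (b r)) /\ Delta x = \sum_(r < k) a r *t b r.
Proof. by move=> hx; have := wk_Delta_range W hx. Qed.

Lemma es_lin : linP es.
Proof. by move=> a x y; rewrite /eps_s /tmul Dlin tbil_lin. Qed.
Lemma et_lin : linP et.
Proof. by move=> a x y; rewrite /eps_t /tmul Dlin tbil_lin. Qed.

Lemma es_sum x : M x -> forall k (a b : 'I_k -> MM),
  Delta x = \sum_(r < k) a r *t b r -> es x = \sum_(r < k) S (a r) *m b r.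
Proof. by move=> _ k a b hD; rewrite /eps_s /tmul hD tbil_sum //; apply: bil_tmul => //; apply: Slin. Qed.
Lemma et_sum x : M x -> forall k (a b : 'I_k -> MM),
  Delta x = \sum_(r < k) a r *t b r -> et x = \sum_(r < k) a r *m S (b r).
Proof. by move=> _ k a b hD; rewrite /eps_t /tmul hD tbil_sum //; apply: bil_tmul => //; apply: Slin. Qed.

Lemma MS x : M x -> M (S x). Proof. exact: (wk_S_range W). Qed.

Lemma Mes x : M x -> M (es x).
Proof.
move=> hx; have [k [a [b [hab hD]]]] := repr hx.
rewrite (es_sum hx hD); apply: Msum => r _; case: (hab r) => ha hb.
by apply: Mmul => //; apply: MS.
Qed.
Lemma Met x : M x -> M (et x).
Proof.
move=> hx; have [k [a [b [hab hD]]]] := repr hx.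
rewrite (et_sum hx hD); apply: Msum => r _; case: (hab r) => ha hb.
by apply: Mmul => //; apply: MS.
Qed.

End WK.
Lemma mxstarD m (A B : 'M[CC]_m) : mxstar (A + B) = mxstar A + mxstar B.
Proof. by apply/matrixP => i j; rewrite !mxE rmorphD. Qed.
Lemma mxstar0 m : mxstar (0 : 'M[CC]_m) = 0.
Proof. by apply/matrixP => i j; rewrite !mxE rmorph0. Qed.
Lemma mxstarZ m a (A : 'M[CC]_m) : mxstar (a *: A) = Num.conj a *: mxstar A.
Proof. by apply/matrixP => i j; rewrite !mxE rmorphM. Qed.
Lemma mxstar_sum m I (r : seq I) (P : pred I) (F : I -> 'M[CC]_m) :
  mxstar (\sum_(i <- r | P i) F i) = \sum_(i <- r | P i) mxstar (F i).
Proof. exact: (big_morph _ (@mxstarD m) (@mxstar0 m)). Qed.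

Section WK2.
Variables (n : nat) (M : 'M[CC]_n -> Prop) (Delta : 'M[CC]_n -> 'M[CC]_(n * n))
  (S : 'M[CC]_n -> 'M[CC]_n) (eps : 'M[CC]_n -> CC).
Hypothesis W : weak_kac M Delta S eps.
Local Notation MM := 'M[CC]_n.
Local Notation e := (Delta 1%:M).
Local Notation es := (eps_s Delta S).
Local Notation et := (eps_t Delta S).

Lemma linS_lm x : linS (fun c : MM => eps (x *m c)).
Proof. by move=> a c d /=; rewrite mulmxDr -scalemxAr (elin W). Qed.
Lemma linS_rm y : linS (fun c : MM => eps (c *m y)).
Proof. by move=> a c d /=; rewrite mulmxDl -scalemxAl (elin W). Qed.

Lemma E1 : tmap es id e = e.
Proof. by rewrite (wk_eps_s W (M1 W)) tens11 mul1mx. Qed.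

Lemma I1 x : M x -> es x = tfunr (fun c => eps (x *m c)) e.
Proof.
move=> hx; have := wk_eps_s W hx; move=> /(congr1 (tfunr eps)).
have [k [a [b [hab hD]]]] := repr W hx.
have [k' [a' [b' [hab' he]]]] := repr W (M1 W).
rewrite {1}hD /tmap tbil_sum; last by apply: bil_tmap; [exact: es_lin W|exact: linP_id].
rewrite /tfunr tbil_sum; last by apply: bil_funr; exact: elin W.
under eq_bigr do rewrite -(linPZ (es_lin W)).
rewrite -(linP_sum (es_lin W)).
have -> : \sum_(i < k) eps (b i) *: a i = x.
  rewrite -[RHS](wk_eps_counitr W hx) hD /tfunr tbil_sum //; apply: bil_funr; exact: elin W.
move=> ->; rewrite he mulmx_sumr.
under eq_bigr do rewrite tensmx_mul mul1mx.
rewrite !tbil_sum //; apply: bil_funr; [exact: elin W | exact: linS_lm].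
Qed.

Lemma flip_sum (V : lmodType CC) (h : MM -> MM -> V) k (a b : 'I_k -> MM) :
  bil h -> e = \sum_(r < k) a r *t b r ->
  \sum_(r < k) h (b r) (a r) = \sum_(r < k) h (S (a r)) (S (b r)).
Proof.
move=> hb he; have := wk_S_Delta W (M1 W); rewrite (wk_S_unital W).
move=> /(congr1 (tbil h)); rewrite he /tmap /tflip.
by rewrite !tbil_sum //; try (apply: bil_tmap; exact: Slin W); exact: bil_flip.
Qed.

Lemma flip_sumS (h : MM -> MM -> CC) k (a b : 'I_k -> MM) :
  bilS h -> e = \sum_(r < k) a r *t b r ->
  \sum_(r < k) h (b r) (a r) = \sum_(r < k) h (S (a r)) (S (b r)).
Proof.
move=> hb he; have := wk_S_Delta W (M1 W); rewrite (wk_S_unital W).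
move=> /(congr1 (tbils h)); rewrite he /tmap /tflip.
rewrite !tbil_sum //; try (apply: bil_tmap; exact: Slin W); try exact: bil_flip.
by rewrite !tbils_sum.
Qed.

Lemma star_sum (V : lmodType CC) (h : MM -> MM -> V) k (a b : 'I_k -> MM) :
  bil h -> e = \sum_(r < k) a r *t b r ->
  \sum_(r < k) h (mxstar (a r)) (mxstar (b r)) = \sum_(r < k) h (a r) (b r).
Proof.
move=> hb he; have := wk_Delta_star W (M1 W); rewrite mxstar1 he mxstar_sum.
under [in X in _ = X -> _]eq_bigr do rewrite mxstar_tens.
by move=> /(congr1 (tbil h)); rewrite !tbil_sum.
Qed.

Lemma star_sumS (h : MM -> MM -> CC) k (a b : 'I_k -> MM) :
  bilS h -> e = \sum_(r < k) a r *t b r ->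
  \sum_(r < k) h (mxstar (a r)) (mxstar (b r)) = \sum_(r < k) h (a r) (b r).
Proof.
move=> hb he; have := wk_Delta_star W (M1 W); rewrite mxstar1 he mxstar_sum.
under [in X in _ = X -> _]eq_bigr do rewrite mxstar_tens.
by move=> /(congr1 (tbils h)); rewrite !tbils_sum.
Qed.

Lemma emul_sum x y k (a b : 'I_k -> MM) : M x -> M y ->
  e = \sum_(r < k) a r *t b r ->
  eps (x *m y) = \sum_(r < k) eps (x *m a r) * eps (b r *m y).
Proof.
move=> hx hy he; rewrite -(wk_eps_mul W hx hy) he mulmx_sumr mulmx_suml.
under eq_bigr do rewrite !tensmx_mul mulmx1 mul1mx.
by rewrite tbils_sum //; exact: (bilS_mul (elin W) (elin W)).
Qed.

End WK2.

Section WK3.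
Variables (n : nat) (M : 'M[CC]_n -> Prop) (Delta : 'M[CC]_n -> 'M[CC]_(n * n))
  (S : 'M[CC]_n -> 'M[CC]_n) (eps : 'M[CC]_n -> CC).
Hypothesis W : weak_kac M Delta S eps.
Local Notation MM := 'M[CC]_n.
Local Notation e := (Delta 1%:M).
Local Notation es := (eps_s Delta S).
Local Notation et := (eps_t Delta S).

Lemma I4 x y : M x -> M y -> eps (es x *m y) = eps (x *m y).
Proof.
move=> hx hy.
have [k [a [b [hab he]]]] := repr W (M1 W).
rewrite (I1 W hx) he /tfunr tbil_sum; last by apply: bil_funr; exact: linS_lm W x.
rewrite mulmx_suml (linS_sum (elin W)).
under eq_bigr do rewrite -scalemxAl (linSZ (elin W)).
have := flip_sumS W (bilS_mul (linS_lm W x) (linS_rm W y)) he; rewrite /= => ->.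
have t1 r : eps (x *m S (a r)) = eps (a r *m S x).
  case: (hab r) => ha hb.
  by rewrite -[RHS](wk_eps_S W (Mmul W ha (MS W hx))) (wk_S_antimul W ha (MS W hx)) (wk_S_invol W hx).
have t2 r : eps (S (b r) *m y) = eps (S y *m b r).
  case: (hab r) => ha hb.
  by rewrite -[RHS](wk_eps_S W (Mmul W (MS W hy) hb)) (wk_S_antimul W (MS W hy) hb) (wk_S_invol W hy).
under eq_bigr do rewrite t1 t2.
have := star_sumS W (bilS_mul (linS_rm W (S x)) (linS_lm W (S y))) he; rewrite /= => <-.
have t3 r : eps (mxstar (a r) *m S x) = Num.conj (eps (mxstar (S x) *m a r)).
  case: (hab r) => ha hb.
  by rewrite -(wk_eps_star W (Mmul W (Mstar W (MS W hx)) ha)) mxstarM mxstarK.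
have t4 r : eps (S y *m mxstar (b r)) = Num.conj (eps (b r *m mxstar (S y))).
  case: (hab r) => ha hb.
  by rewrite -(wk_eps_star W (Mmul W hb (Mstar W (MS W hy)))) mxstarM mxstarK.
under eq_bigr do rewrite t3 t4 -rmorphM.
rewrite -rmorph_sum -(emul_sum W (Mstar W (MS W hx)) (Mstar W (MS W hy)) he).
rewrite -mxstarM (wk_eps_star W (Mmul W (MS W hy) (MS W hx))) /= conjCK.
by rewrite -(wk_S_antimul W hx hy) (wk_eps_S W (Mmul W hx hy)).
Qed.

Lemma ET y : M y -> et y = S (es (S y)).
Proof.
move=> hy.
have [k [c [d [hcd hD]]]] := repr W hy.
have [k' [c' [d' [hcd' hD']]]] := repr W (MS W hy).
have hDS : Delta (S y) = \sum_(r < k) S (d r) *t S (c r).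
  move: (congr1 (@tflip n) (wk_S_Delta W hy)).
  rewrite hD hD' /tflip /tmap !tbil_sum //; try (apply: bil_tmap; exact: Slin W);
    try exact: bil_flip.
rewrite /eps_t /eps_s /tmul hD hDS !tbil_sum //;
  try (apply: bil_tmul; first [exact: linP_id | exact: Slin W]; first [exact: linP_id | exact: Slin W]).
rewrite (linP_sum (Slin W)); apply: eq_bigr => r _; case: (hcd r) => hc hdd.
by rewrite (wk_S_invol W hdd) (wk_S_antimul W hdd (MS W hc)) (wk_S_invol W hc).
Qed.

Lemma I5 x y : M x -> M y -> eps (x *m et y) = eps (x *m y).
Proof.
move=> hx hy; rewrite (ET hy).
have hz := Mes W (MS W hy).
have -> : x *m S (es (S y)) = S (es (S y) *m S x).
  by rewrite (wk_S_antimul W hz (MS W hx)) (wk_S_invol W hx).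
rewrite (wk_eps_S W (Mmul W hz (MS W hx))).
rewrite (I4 (MS W hy) (MS W hx)) -(wk_S_antimul W hx hy).
exact: (wk_eps_S W (Mmul W hx hy)).
Qed.

Lemma tbil_ext (V : lmodType CC) (h h' : MM -> MM -> V) T :
  (forall a b, h a b = h' a b) -> tbil h T = tbil h' T.
Proof.
move=> H; rewrite /tbil; apply: eq_bigr => i _; apply: eq_bigr => j _.
by apply: eq_bigr => k _; apply: eq_bigr => l _; rewrite H.
Qed.

Lemma es1 : es 1%:M = 1%:M.
Proof.
rewrite (I1 W (M1 W)) -[RHS](wk_eps_counitr W (M1 W)) /tfunr.
by apply: tbil_ext => a b; rewrite mul1mx.
Qed.

Lemma et1 : et 1%:M = 1%:M.
Proof. by rewrite (ET (M1 W)) (wk_S_unital W) es1 (wk_S_unital W). Qed.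

Lemma W2 y : M y -> et y = tfunl (fun c => eps (c *m y)) e.
Proof.
move=> hy; rewrite (ET hy) (I1 W (MS W hy)).
have [k [a [b [hab he]]]] := repr W (M1 W).
rewrite he /tfunr /tfunl !tbil_sum; try (apply: bil_funl; exact: linS_rm W y);
  try (apply: bil_funr; exact: linS_lm W (S y)).
rewrite (linP_sum (Slin W)).
under eq_bigr do rewrite (linPZ (Slin W)).
have := flip_sum W (bil_funr (linS_rm W y)) he; rewrite /= => ->.
apply: eq_bigr => r _; case: (hab r) => ha hb.
by rewrite -[in LHS](wk_eps_S W (Mmul W (MS W hy) hb)) (wk_S_antimul W (MS W hy) hb) (wk_S_invol W hy).
Qed.

End WK3.
Lemma tassoc_lin n : linP (@tassoc n).
Proof. by move=> a X Y; apply/matrixP => i j; rewrite /tassoc castmxE !mxE !castmxE. Qed.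

Lemma tensmx_sumr n (A : 'M[CC]_n) k (F : 'I_k -> 'M[CC]_(n * n)) :
  A *t (\sum_(r < k) F r) = \sum_(r < k) A *t F r.
Proof. exact: (linP_sum (fun a x y => tensmxDr a A x y)). Qed.
Lemma tensmx_sumr1 n (A : 'M[CC]_n) k (F : 'I_k -> 'M[CC]_n) :
  A *t (\sum_(r < k) F r) = \sum_(r < k) A *t F r.
Proof. exact: (linP_sum (fun a x y => tensmxDr a A x y)). Qed.
Lemma tensmxZr m1 m2 p1 p2 (a : CC) (A : 'M[CC]_(m1, m2)) (B : 'M[CC]_(p1, p2)) :
  A *t (a *: B) = a *: (A *t B).
Proof. by rewrite -[a *: B]addr0 tensmxDr tensmx0 addr0. Qed.
Lemma tensmxZl m1 m2 p1 p2 (a : CC) (A : 'M[CC]_(m1, m2)) (B : 'M[CC]_(p1, p2)) :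
  (a *: A) *t B = a *: (A *t B).
Proof. by rewrite -[a *: A]addr0 tensmxDl tens0mx addr0. Qed.

Lemma sl3_tassoc n (lam : 'M[CC]_n -> CC) (A : 'M[CC]_n) k (c d : 'I_k -> 'M[CC]_n) :
  linS lam ->
  sl3 lam (tassoc (A *t \sum_(r < k) c r *t d r)) = A *t tfunr lam (\sum_(r < k) c r *t d r).
Proof.
move=> hl; rewrite tensmx_sumr (linP_sum (@tassoc_lin n)) (linP_sum (sl3_lin lam)).
rewrite /tfunr tbil_sum; last first.
  split => [b|a0] z x y /=; first by rewrite scalerDr !scalerA mulrC.
  by rewrite hl scalerDl scalerA.
rewrite tensmx_sumr1; apply: eq_bigr => r _.
by rewrite tassoc_tens sl3_tens // tensmxZr.
Qed.

Section WK4.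
Variables (n : nat) (M : 'M[CC]_n -> Prop) (Delta : 'M[CC]_n -> 'M[CC]_(n * n))
  (S : 'M[CC]_n -> 'M[CC]_n) (eps : 'M[CC]_n -> CC).
Hypothesis W : weak_kac M Delta S eps.
Local Notation MM := 'M[CC]_n.
Local Notation e := (Delta 1%:M).
Local Notation es := (eps_s Delta S).
Local Notation et := (eps_t Delta S).

Lemma CS (lam : MM -> CC) : linS lam ->
  Delta (tfunr lam e) = tmap id (fun b => tfunr lam (Delta b)) e.
Proof.
move=> hl.
have [k [a [b [hab he]]]] := repr W (M1 W).
have hbr : bil (fun a0 b0 : MM => lam b0 *: a0).
  split => [b0|a0] z x y /=; first by rewrite scalerDr !scalerA mulrC.
  by rewrite hl scalerDl scalerA.
transitivity (sl3 lam (tmap Delta id e)).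
  rewrite he /tmap /tfunr !tbil_sum //; try exact: (bil_tmap (Dlin W) (@linP_id _)).
  rewrite (linP_sum (Dlin W)) (linP_sum (sl3_lin lam)); apply: eq_bigr => r _.
  by rewrite sl3_tens // (linPZ (Dlin W)).
rewrite (wk_coassoc W (M1 W)) he /tmap !tbil_sum;
  try exact: (bil_tmap (@linP_id _) (Dlin W));
  try (apply: bil_tmap; first exact: linP_id;
    by move=> z x y; rewrite /tfunr (Dlin W) tbil_lin).
rewrite (linP_sum (@tassoc_lin n)) (linP_sum (sl3_lin lam)); apply: eq_bigr => r _.
case: (hab r) => _ hb; have [k' [c [d [_ hD]]]] := repr W hb.
by rewrite hD sl3_tassoc.
Qed.

End WK4.
Section WK5.
Variables (n : nat) (M : 'M[CC]_n -> Prop) (Delta : 'M[CC]_n -> 'M[CC]_(n * n))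
  (S : 'M[CC]_n -> 'M[CC]_n) (eps : 'M[CC]_n -> CC).
Hypothesis W : weak_kac M Delta S eps.
Local Notation MM := 'M[CC]_n.
Local Notation e := (Delta 1%:M).
Local Notation es := (eps_s Delta S).
Local Notation et := (eps_t Delta S).

Lemma bil_fr (lam : MM -> CC) : linS lam -> bil (fun a0 b0 : MM => lam b0 *: a0).
Proof.
move=> hl; split => [b0|a0] z x y /=; first by rewrite scalerDr !scalerA mulrC.
by rewrite hl scalerDl scalerA.
Qed.

Lemma Mtfunr (lam : MM -> CC) : linS lam -> M (tfunr lam e).
Proof.
move=> hl; have [k [a [b [hab he]]]] := repr W (M1 W).
rewrite he /tfunr tbil_sum; last exact: bil_fr.
by apply: (Msum W) => r _; apply: (MZ W); case: (hab r).
Qed.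

Lemma tmap_comm (F f : MM -> MM) : linP F -> linP f ->
  tmap f id (tmap id F e) = tmap id F (tmap f id e).
Proof.
move=> hF hf; have [k [a [b [hab he]]]] := repr W (M1 W).
rewrite he /tmap !tbil_sum //; try exact: (bil_tmap hf (@linP_id _));
  exact: (bil_tmap (@linP_id _) hF).
Qed.

Lemma QA (lam : MM -> CC) : linS lam ->
  Delta (tfunr lam e) = (1%:M *t tfunr lam e) *m e.
Proof.
move=> hl; rewrite -(wk_eps_s W (Mtfunr hl)) (CS W hl) tmap_comm ?(E1 W) //.
- by move=> z x y; rewrite /tfunr (Dlin W) tbil_lin.
- exact: es_lin W.
Qed.

Lemma estar : mxstar e = e.
Proof. by rewrite -(wk_Delta_star W (M1 W)) mxstar1. Qed.

Lemma QB (lam : MM -> CC) : linS lam ->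
  Delta (tfunr lam e) = e *m (1%:M *t tfunr lam e).
Proof.
move=> hl.
pose lam' := fun c : MM => Num.conj (lam (mxstar c)).
have hl' : linS lam'.
  by move=> a x y; rewrite /lam' mxstar_lin hl rmorphD rmorphM /= conjCK.
have hs : mxstar (tfunr lam e) = tfunr lam' e.
  have [k [a [b [hab he]]]] := repr W (M1 W).
  rewrite he /tfunr !tbil_sum; try exact: bil_fr.
  rewrite mxstar_sum; under eq_bigr do rewrite mxstarZ.
  rewrite -(star_sum W (bil_fr hl') he) /=; apply: eq_bigr => r _.
  by rewrite /lam' mxstarK.
rewrite -[tfunr lam e]mxstarK hs (wk_Delta_star W (Mtfunr hl')) (QA hl') mxstarM estar.
by rewrite mxstar_tens mxstar1 -hs mxstarK.
Qed.

Definition Qs (y : MM) := [/\ M y, Delta y = (1%:M *t y) *m e & Delta y = e *m (1%:M *t y)].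

Lemma Qtfunr (lam : MM -> CC) : linS lam -> Qs (tfunr lam e).
Proof. by move=> hl; split; [exact: Mtfunr | exact: QA | exact: QB]. Qed.

Lemma ee : e *m e = e.
Proof. by rewrite -(wk_Delta_mul W (M1 W) (M1 W)) mulmx1. Qed.

Lemma Q1 : Qs 1%:M.
Proof. by split; [exact: M1 W | rewrite tens11 mul1mx | rewrite tens11 mulmx1]. Qed.

Lemma Qlin a x y : Qs x -> Qs y -> Qs (a *: x + y).
Proof.
move=> [hx h1 h2] [hy k1 k2]; split; first exact: (Mlin W).
- by rewrite (Dlin W) h1 k1 tensmxDr mulmxDl scalemxAl.
- by rewrite (Dlin W) h2 k2 tensmxDr mulmxDr scalemxAr.
Qed.

Lemma Qmul x y : Qs x -> Qs y -> Qs (x *m y).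
Proof.
move=> [hx h1 h2] [hy k1 k2]; split; first exact: (Mmul W).
- rewrite (wk_Delta_mul W hx hy) h1 k1 mulmxA -(mulmxA _ e) -k2 k1 !mulmxA.
  by rewrite -(mulmxA _ e e) ee tensmx_mul mulmx1.
- rewrite (wk_Delta_mul W hx hy) h2 k2 !mulmxA -(mulmxA e) -h1 h2 !mulmxA ee.
  by rewrite -!mulmxA tensmx_mul mulmx1.
Qed.

Lemma Qstar x : Qs x -> Qs (mxstar x).
Proof.
move=> [hx h1 h2]; split; first exact: (Mstar W).
- by rewrite (wk_Delta_star W hx) h2 mxstarM estar mxstar_tens mxstar1.
- by rewrite (wk_Delta_star W hx) h1 mxstarM estar mxstar_tens mxstar1.
Qed.

Lemma Qes x : M x -> Qs (es x).
Proof. by move=> hx; rewrite (I1 W hx); apply: Qtfunr; exact: linS_lm W x. Qed.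

Lemma Q4 y : Qs y -> et y = S y.
Proof.
move=> [hy h1 h2].
have [k [a [b [hab he]]]] := repr W (M1 W).
have := et1 W; rewrite {1}/eps_t /tmul he tbil_sum; last exact: (bil_tmul (@linP_id _) (Slin W)).
move=> h1'.
rewrite /eps_t /tmul h1 he mulmx_sumr.
under eq_bigr do rewrite tensmx_mul mul1mx.
rewrite tbil_sum; last exact: (bil_tmul (@linP_id _) (Slin W)).
rewrite -[RHS]mul1mx -h1' mulmx_suml; apply: eq_bigr => r _; case: (hab r) => ha hb.
by rewrite (wk_S_antimul W hy hb) mulmxA.
Qed.

End WK5.
Definition cst m (xi : 'cV[CC]_m) : 'rV[CC]_m := (map_mx Num.conj xi)^T.
Definition qf m (A : 'M[CC]_m) (xi : 'cV[CC]_m) : CC := (cst xi *m A *m xi) 0 0.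

Lemma qf_lin m (xi : 'cV[CC]_m) : linS (fun A => qf A xi).
Proof. by move=> a A B; rewrite /qf mulmxDr mulmxDl -scalemxAr -scalemxAl !mxE. Qed.

Lemma qf_star m (A B : 'M[CC]_m) xi :
  qf (mxstar A *m B) xi = \sum_(i < m) Num.conj ((A *m xi) i 0) * (B *m xi) i 0.
Proof.
rewrite /qf /cst /mxstar !mulmxA -trmx_mul -map_mxM -mulmxA mxE.
by apply: eq_bigr => i _; rewrite !mxE.
Qed.

Lemma tr_ge0 m (B : 'M[CC]_m) : 0 <= \tr (B *m mxstar B).
Proof.
rewrite /mxtrace; apply: sumr_ge0 => i _; rewrite mxE; apply: sumr_ge0 => j _.
by rewrite !mxE mul_conjC_ge0.
Qed.

Lemma tr_star m (A : 'M[CC]_m) : \tr (mxstar A) = Num.conj (\tr A).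
Proof. by rewrite /mxtrace rmorph_sum; apply: eq_bigr => i _; rewrite !mxE. Qed.

Lemma tr_lin m : linS (@mxtrace _ m).
Proof. by move=> a A B; rewrite mxtraceD mxtraceZ. Qed.

Section WK6.
Variables (n : nat) (M : 'M[CC]_n -> Prop) (Delta : 'M[CC]_n -> 'M[CC]_(n * n))
  (S : 'M[CC]_n -> 'M[CC]_n) (eps : 'M[CC]_n -> CC).
Hypothesis W : weak_kac M Delta S eps.
Local Notation MM := 'M[CC]_n.
Local Notation e := (Delta 1%:M).
Local Notation es := (eps_s Delta S).
Local Notation et := (eps_t Delta S).

Lemma linS_trS : linS (fun c : MM => \tr (S c)).
Proof. by move=> a x y; rewrite (Slin W) tr_lin. Qed.

Definition gg := tfunr (fun c : MM => \tr (S c)) e.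

Lemma Qg : Qs M Delta gg.
Proof. rewrite /gg; exact: (Qtfunr W linS_trS). Qed.

Lemma Q5 y : Qs M Delta y -> \tr y = eps (gg *m y).
Proof.
move=> hQ; have [hy _ _] := hQ.
have [k [a [b [hab he]]]] := repr W (M1 W).
rewrite -{1}(wk_S_invol W hy) -(Q4 W hQ) (W2 W hy) /gg he /tfunr /tfunl !tbil_sum;
  try exact: (bil_fr linS_trS); try exact: bil_funl (linS_rm W y).
rewrite (linS_sum linS_trS) mulmx_suml (linS_sum (elin W)); apply: eq_bigr => r _.
by rewrite (linSZ linS_trS) -scalemxAl (linSZ (elin W)) mulrC.
Qed.

End WK6.
Section WK7.
Variables (n : nat) (M : 'M[CC]_n -> Prop) (Delta : 'M[CC]_n -> 'M[CC]_(n * n))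
  (S : 'M[CC]_n -> 'M[CC]_n) (eps : 'M[CC]_n -> CC).
Hypothesis W : weak_kac M Delta S eps.
Local Notation MM := 'M[CC]_n.
Local Notation e := (Delta 1%:M).
Local Notation g := (gg Delta S).

Lemma g_herm : mxstar g = g.
Proof.
have [k [a [b [hab he]]]] := repr W (M1 W).
pose lam' := fun c : MM => Num.conj (\tr (S (mxstar c))).
have hl' : linS lam'.
  by move=> z x y; rewrite /lam' mxstar_lin (Slin W) tr_lin rmorphD rmorphM /= conjCK.
rewrite /gg he /tfunr tbil_sum; last exact: (bil_fr (linS_trS W)).
rewrite mxstar_sum.
have := star_sum W (bil_fr hl') he; rewrite /= => hs.
transitivity (\sum_(r < k) lam' (mxstar (b r)) *: mxstar (a r)).
  by apply: eq_bigr => r _; rewrite mxstarZ /lam' mxstarK.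
rewrite hs; apply: eq_bigr => r _; case: (hab r) => ha hb.
by rewrite /lam' (wk_S_star W hb) tr_star conjCK.
Qed.

Lemma g_psd xi : 0 <= qf g xi.
Proof.
have [k [a [b [hab he]]]] := repr W (M1 W).
pose A := fun m : 'I_n => \sum_(r < k) ((a r *m xi) m 0) *: b r.
have MA m : M (A m).
  by apply: (Msum W) => r _; apply: (MZ W); case: (hab r).
have hY : \sum_(r < k) qf (a r) xi *: b r = \sum_(m < n) mxstar (A m) *m A m.
  have hl : linS (fun c : MM => qf c xi) by exact: qf_lin.
  have h1 : tfunl (fun c => qf c xi) e = \sum_(r < k) qf (a r) xi *: b r.
    by rewrite he /tfunl tbil_sum //; exact: bil_funl hl.
  rewrite -h1 -(ee W) -{1}(estar W) he mxstar_sum mulmx_suml.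
  rewrite /tfunl (linP_sum (tbil_lin _)).
  under eq_bigr do rewrite mulmx_sumr (linP_sum (tbil_lin _)).
  have ht X Y : tbil (fun a0 b0 : MM => qf a0 xi *: b0) (X *t Y) = qf X xi *: Y.
    by apply: tbil_tens; exact: bil_funl hl.
  under eq_bigr do under eq_bigr do rewrite mxstar_tens tensmx_mul ht qf_star.
  symmetry; rewrite /A /=.
  under eq_bigr do rewrite mxstar_sum mulmx_suml.
  rewrite exchange_big /=; apply: eq_bigr => r _.
  under eq_bigr do rewrite mulmx_sumr.
  rewrite exchange_big /=; apply: eq_bigr => s _.
  rewrite scaler_suml; apply: eq_bigr => m _.
  by rewrite mxstarZ -scalemxAl -scalemxAr scalerA.
rewrite /gg he /tfunr tbil_sum; last exact: (bil_fr (linS_trS W)).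
rewrite (linS_sum (qf_lin xi)).
under eq_bigr do rewrite (linSZ (qf_lin xi)) mulrC.
have -> : \sum_(r < k) qf (a r) xi * \tr (S (b r)) = \tr (S (\sum_(r < k) qf (a r) xi *: b r)).
  rewrite (linS_sum (linS_trS W)); apply: eq_bigr => r _.
  by rewrite (linSZ (linS_trS W)).
rewrite hY (linS_sum (linS_trS W)); apply: sumr_ge0 => m _.
rewrite (wk_S_antimul W (Mstar W (MA m)) (MA m)) (wk_S_star W (MA m)).
exact: tr_ge0.
Qed.

End WK7.
Lemma BBs_eq0 m (B : 'M[CC]_m) : B *m mxstar B = 0 -> B = 0.
Proof.
move=> h0; have : \tr (B *m mxstar B) = 0 by rewrite h0 mxtrace0.
rewrite /mxtrace => /eqP; rewrite psumr_eq0; last first.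
  move=> i _; rewrite mxE; apply: sumr_ge0 => j _; by rewrite !mxE mul_conjC_ge0.
move=> /allP H; apply/matrixP => i j; rewrite mxE.
have := H i (mem_index_enum _); rewrite implyTb mxE psumr_eq0; last first.
  by move=> l _; rewrite !mxE mul_conjC_ge0.
move=> /allP/(_ j (mem_index_enum _)); rewrite implyTb !mxE mul_conjC_eq0.
by move/eqP.
Qed.

Lemma BsB_eq0 m (B : 'M[CC]_m) : mxstar B *m B = 0 -> B = 0.
Proof.
move=> h; have : mxstar B *m mxstar (mxstar B) = 0 by rewrite mxstarK.
by move/BBs_eq0 => h2; rewrite -[B]mxstarK h2 /mxstar map_mx0 trmx0.
Qed.

Lemma mxstarX m (h : 'M[CC]_m) k : mxstar h = h -> mxstar (h ^+ k) = h ^+ k.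
Proof.
move=> hh; elim: k => [|k IH]; first by rewrite !expr0 mxstar1.
rewrite exprS; change (mxstar (h *m h ^+ k) = h *m h ^+ k); rewrite mxstarM IH hh.
exact: (esym (commrX k (commr_refl h))).
Qed.

Section Herm.
Variable m' : nat.
Local Notation m := m'.+1.
Local Notation MM := 'M[CC]_m.

Lemma KH (h X : MM) j : mxstar h = h -> h ^+ j.+2 *m X = 0 -> h ^+ j.+1 *m X = 0.
Proof.
move=> hh H; apply: BsB_eq0.
rewrite mxstarM (mxstarX _ hh) -mulmxA (mulmxA (h ^+ j.+1)).
rewrite -[h ^+ j.+1 *m h ^+ j.+1]/(h ^+ j.+1 * h ^+ j.+1) -exprD.
have -> : (j.+1 + j.+1 = j + j.+2)%N by rewrite !addSn !addnS.
rewrite exprD -[h ^+ j * h ^+ j.+2]/(h ^+ j *m h ^+ j.+2) -mulmxA H.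
by rewrite !mulmx0.
Qed.

Lemma KH1 (h X : MM) k : mxstar h = h -> h ^+ k *m X = 0 -> h *m X = 0.
Proof.
move=> hh; case: k => [|k]; first by rewrite expr0 mul1mx => ->; rewrite mulmx0.
elim: k => [|k IH]; first by rewrite expr1.
by move=> H; apply: IH; apply: KH.
Qed.

Lemma trmx_horner (A : MM) p : (horner_mx A p)^T = horner_mx A^T p.
Proof.
elim/poly_ind: p => [|p c IH]; first by rewrite !rmorph0 trmx0.
rewrite !rmorphD !rmorphM /= !horner_mx_X !horner_mx_C raddfD /= trmx_mul IH tr_scalar_mx.
by congr (_ + _); apply: comm_mx_horner; rewrite /comm_mx.
Qed.

Lemma take1_0 (p : {poly CC}) : p`_0 = 0 -> p = drop_poly 1 p * 'X.
Proof.
move=> h0; rewrite -{1}(poly_take_drop 1 p) expr1.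
suff -> : take_poly 1 p = 0 by rewrite add0r.
by apply/polyP => i; rewrite coef_take_poly coef0; case: i => //=.
Qed.

Lemma HD (h : MM) : mxstar h = h -> exists q r : {poly CC},
  [/\ horner_mx h q *m horner_mx h q = horner_mx h q,
      mxstar (horner_mx h q) = horner_mx h q,
      h *m horner_mx h q = 0 &
      1%:M - horner_mx h q = horner_mx h r *m h].
Proof.
move=> hh.
pose P := char_poly h.
pose Q := P * map_poly Num.conj P.
have Pn0 : P != 0 by apply: monic_neq0; exact: char_poly_monic.
have cPn0 : map_poly Num.conj P != 0 by rewrite map_poly_eq0.
have Qn0 : Q != 0 by rewrite mulf_neq0.
have hQ : horner_mx h Q = 0 by rewrite rmorphM /= Cayley_Hamilton mul0r.
have ccK (p : {poly CC}) : map_poly Num.conj (map_poly Num.conj p) = p.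
  by apply/polyP => i; rewrite !coef_map /= conjCK.
have Qr : map_poly Num.conj Q = Q by rewrite rmorphM /= ccK mulrC.
have [k [q0 nr Qe]] := multiplicity_XsubC Q 0.
move: nr; rewrite Qn0 implyTb /root => nr.
rewrite subr0 in Qe.
have q0r : map_poly Num.conj q0 = q0.
  have := Qr; rewrite Qe rmorphM rmorphXn /= map_polyX.
  by move/mulIf; apply; rewrite expf_neq0 // polyX_eq0.
set c0 := q0.[0] in nr.
have c0r : Num.conj c0 = c0.
  by rewrite /c0 horner_coef0 -{2}q0r coef_map.
pose q := c0^-1 *: q0.
have qr : map_poly Num.conj q = q.
  have c0r2 : Num.Num_conj__canonical__GRing_RMorphism CC c0 = c0 by exact: c0r.
  apply/polyP => i; rewrite coef_map /= /q !coefZ rmorphM /= fmorphV c0r2.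
  by rewrite -{2}q0r coef_map.
have q00 : q`_0 = 1 by rewrite /q coefZ -horner_coef0 -/c0 mulVf.
pose C := horner_mx h q.
have hC1 : C *m h ^+ k = 0.
  have : horner_mx h q0 *m h ^+ k = 0 by rewrite -hQ Qe rmorphM rmorphXn /= horner_mx_X.
  by rewrite /C /q horner_mxZ -scalemxAl => ->; rewrite scaler0.
have hC : h *m C = 0.
  apply: (KH1 (k := k)) => //.
  have : comm_mx (h ^+ k) C.
    by apply: comm_mx_horner; exact: (commr_sym (commrX k (commr_refl h))).
  by rewrite /comm_mx => ->; exact: hC1.
exists q, (drop_poly 1 (1 - q)).
have e1 : 1%:M - C = horner_mx h (drop_poly 1 (1 - q)) *m h.
  have -> : horner_mx h (drop_poly 1 (1 - q)) *m h = horner_mx h (drop_poly 1 (1 - q) * 'X).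
    by rewrite rmorphM /= horner_mx_X.
  rewrite -take1_0; last by rewrite coefB coef1 q00 subrr.
  have hB : horner_mx h (1 - q) = horner_mx h 1 - horner_mx h q by exact: rmorphB.
  by rewrite hB -polyC1 horner_mx_C /C.
rewrite -/C; split => //.
- have h0 : C *m (1%:M - C) = 0.
    rewrite e1 mulmxA.
    have -> : C *m horner_mx h (drop_poly 1 (1 - q)) = horner_mx h (drop_poly 1 (1 - q)) *m C.
      exact: comm_horner_mx2.
    have hCh : C *m h = h *m C by apply: comm_horner_mx.
    by rewrite -mulmxA hCh hC mulmx0.
  by move: h0; rewrite mulmxBr mulmx1 => /eqP; rewrite subr_eq0 eq_sym => /eqP.
- rewrite /mxstar map_horner_mx qr.
  have hT : map_mx Num.conj h = h^T.
    by apply: (can_inj (@trmxK _ _ _)); rewrite trmxK; exact: hh.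
  by rewrite [map_mx _ h]hT trmx_horner trmxK.
Qed.

End Herm.
Section Herm2.
Variable m' : nat.
Local Notation m := m'.+1.
Local Notation MM := 'M[CC]_m.

Lemma horner_in (A : MM -> Prop) :
  A 0 -> A 1%:M -> (forall a x y, A x -> A y -> A (a *: x + y)) ->
  (forall x y, A x -> A y -> A (x *m y)) ->
  forall h p, A h -> A (horner_mx h p).
Proof.
move=> A0 A1 Al Am h p Ah; elim/poly_ind: p => [|p c IH].
  have -> : horner_mx h 0 = 0 by exact: rmorph0.
  exact: A0.
have -> : horner_mx h (p * 'X + c%:P) = horner_mx h p *m h + c%:M.
  by rewrite rmorphD rmorphM /= horner_mx_X horner_mx_C.
rewrite -[horner_mx h p *m h]scale1r -scalemx1.
apply: (Al); first exact: (Am _ _ IH Ah).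
by rewrite -[c *: _]addr0; apply: (Al).
Qed.

Lemma cst_lin (a : CC) (x y : 'cV[CC]_m) : cst (a *: x + y) = Num.conj a *: cst x + cst y.
Proof. by apply/matrixP => i j; rewrite !mxE rmorphD rmorphM. Qed.

Lemma cst_herm (A : MM) (u : 'cV[CC]_m) : mxstar A = A -> cst u *m A = cst (A *m u).
Proof. by move=> hA; rewrite -{1}hA /mxstar /cst -trmx_mul -map_mxM. Qed.

Lemma cstw_ge0 (w : 'cV[CC]_m) : 0 <= (cst w *m w) 0 0.
Proof. by rewrite mxE; apply: sumr_ge0 => i _; rewrite !mxE mulrC mul_conjC_ge0. Qed.

Lemma cstw_eq0 (w : 'cV[CC]_m) : (cst w *m w) 0 0 = 0 -> w = 0.
Proof.
rewrite mxE => /eqP; rewrite psumr_eq0; last by move=> i _; rewrite !mxE mulrC mul_conjC_ge0.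
move=> /allP H; apply/matrixP => i j; rewrite [j]ord1 mxE.
by have := H i (mem_index_enum _); rewrite implyTb !mxE mulrC mul_conjC_eq0 => /eqP.
Qed.

Lemma PZ (A : MM) (u : 'cV[CC]_m) : mxstar A = A -> (forall xi, 0 <= qf A xi) ->
  qf A u = 0 -> A *m u = 0.
Proof.
move=> hA hpos hu; set w := A *m u.
pose a := (cst w *m w) 0 0; pose b := qf A w.
have a0 : 0 <= a by exact: cstw_ge0.
have b0 : 0 <= b by exact: hpos.
have key s : qf A (s *: w + u) = Num.conj s * s * b + (Num.conj s + s) * a.
  rewrite /qf cst_lin !mulmxDl !mulmxDr -!scalemxAl -!scalemxAr.
  have e2 : cst w *m A *m u = cst w *m w by rewrite -mulmxA.
  have e3 : cst u *m A *m w = cst w *m w by rewrite (cst_herm _ hA).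
  rewrite e2 e3 !mxE.
  have hb : \sum_j (cst w *m A) 0 j * w j 0 = b by rewrite /b /qf mxE.
  have ha : \sum_j cst w 0 j * w j 0 = a.
    by rewrite /a mxE.
  have h0 : \sum_j (cst u *m A) 0 j * u j 0 = 0 by rewrite -[RHS]hu /qf mxE.
  rewrite hb ha h0; ring.
pose s := - (a / (b + 1)).
have b1 : b + 1 != 0 by rewrite gt_eqF // ltr_wpDl.
have sr : Num.conj s = s.
  by rewrite /s rmorphN /= geC0_conj // divr_ge0 // addr_ge0.
have := hpos (s *: w + u); rewrite key sr.
have -> : s * s * b + (s + s) * a = - (a ^+ 2 * (b + 2%:R) / (b + 1) ^+ 2).
  by rewrite /s; field.
rewrite oppr_ge0 => hle.
have hX : a ^+ 2 * (b + 2%:R) / (b + 1) ^+ 2 = 0.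
  apply/eqP; rewrite eq_le hle /=; apply: divr_ge0; last exact: exprn_ge0 (addr_ge0 b0 ler01).
  by apply: mulr_ge0; [exact: exprn_ge0 | apply: addr_ge0].
move/eqP: hX; rewrite !mulf_eq0 invr_eq0 !expf_eq0 /= (negPf b1) orbF.
have -> : (b + 2%:R == 0) = false by rewrite gt_eqF // ltr_wpDl.
rewrite orbF => /eqP ha0.
have ha1 : a = 0 by move: ha0; rewrite orbb => /eqP /eqP.
exact: (cstw_eq0 ha1).
Qed.

End Herm2.
Lemma trBBs_eq0 m (B : 'M[CC]_m) : \tr (B *m mxstar B) = 0 -> B = 0.
Proof.
rewrite /mxtrace => /eqP; rewrite psumr_eq0; last first.
  move=> i _; rewrite mxE; apply: sumr_ge0 => j _; by rewrite !mxE mul_conjC_ge0.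
move=> /allP H; apply/matrixP => i j; rewrite mxE.
have := H i (mem_index_enum _); rewrite implyTb mxE psumr_eq0; last first.
  by move=> l _; rewrite !mxE mul_conjC_ge0.
move=> /allP/(_ j (mem_index_enum _)); rewrite implyTb !mxE mul_conjC_eq0.
by move/eqP.
Qed.

Lemma tr_qf m (B R : 'M[CC]_m) :
  \tr (mxstar B *m R *m B) = \sum_(j < m) qf R (col j B).
Proof.
rewrite /mxtrace; apply: eq_bigr => j _.
rewrite /qf /cst !mxE; apply: eq_bigr => k _; rewrite !mxE; congr (_ * _).
by apply: eq_bigr => l _; rewrite !mxE.
Qed.

Section Main.
Variables (n' : nat) (M : 'M[CC]_n'.+1 -> Prop) (Delta : 'M[CC]_n'.+1 -> 'M[CC]_(n'.+1 * n'.+1))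
  (S : 'M[CC]_n'.+1 -> 'M[CC]_n'.+1) (eps : 'M[CC]_n'.+1 -> CC) (p : 'M[CC]_n'.+1).
Hypothesis W : weak_kac M Delta S eps.
Hypothesis Hp : is_support M eps p.
Local Notation MM := 'M[CC]_n'.+1.
Local Notation e := (Delta 1%:M).
Local Notation es := (eps_s Delta S).
Local Notation et := (eps_t Delta S).

Lemma hornerM h q : M h -> M (horner_mx h q).
Proof.
apply: horner_in; [exact: M0 W | exact: M1 W | exact: Mlin W | exact: Mmul W].
Qed.

Lemma Mp : M p. Proof. by case: Hp => [[]]. Qed.
Lemma pstar : mxstar p = p. Proof. by case: Hp => [[]]. Qed.
Lemma pp : p *m p = p. Proof. by case: Hp => [[]]. Qed.

Lemma L1 z : M z -> (forall w, M w -> eps (z *m w) = 0) -> p *m z = 0.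
Proof.
move=> hz H.
pose h := z *m mxstar z.
have hh : mxstar h = h by rewrite /h mxstarM mxstarK.
have Mh : M h by apply: (Mmul W) => //; exact: (Mstar W).
have [q [r [CC2 Cst hC e1]]] := HD hh.
set C := horner_mx h q in CC2 Cst hC e1.
have MC : M C := hornerM q Mh.
have MR : M (horner_mx h r) := hornerM r Mh.
have comR : horner_mx h r *m h = h *m horner_mx h r.
  by apply: comm_horner_mx.
have epsC : eps (1%:M - C) = 0.
  rewrite e1 comR /h -mulmxA; apply: H; apply: (Mmul W) => //; exact: (Mstar W).
have pC : p *m C = p.
  by case: Hp => _ _ /(_ C); apply => //; split.
have Ch : C *m h = 0.
  have : comm_mx C h by apply: comm_horner_mx.
  by rewrite /comm_mx => ->.
have ph : p *m h = 0 by rewrite -pC -mulmxA Ch mulmx0.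
apply: BBs_eq0; rewrite mxstarM -mulmxA (mulmxA z) -/h.
by rewrite mulmxA ph mul0mx.
Qed.

Lemma L1' z : M z -> (forall w, M w -> eps (w *m z) = 0) -> z *m p = 0.
Proof.
move=> hz H.
have : p *m mxstar z = 0.
  apply: L1; first exact: (Mstar W).
  move=> w hw.
  have hw' : M (mxstar w) by exact: (Mstar W).
  rewrite -[w]mxstarK -mxstarM (wk_eps_star W (Mmul W hw' hz)) H //.
  by rewrite rmorph0.
move=> /(congr1 (@mxstar _)); rewrite mxstarM mxstarK pstar => ->.
by rewrite /mxstar map_mx0 trmx0.
Qed.

Lemma Ps x : M x -> p *m x = p *m es x.
Proof.
move=> hx; apply/eqP; rewrite -subr_eq0 -mulmxBr; apply/eqP.
apply: L1; first by apply: (MB W) => //; exact: (Mes W).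
move=> w hw; rewrite mulmxBl (linSB (elin W)) (I4 W hx hw) subrr //.
Qed.

Lemma Pt x : M x -> x *m p = et x *m p.
Proof.
move=> hx; apply/eqP; rewrite -subr_eq0 -mulmxBl; apply/eqP.
apply: L1'; first by apply: (MB W) => //; exact: (Met W).
move=> w hw; rewrite mulmxBr (linSB (elin W)) (I5 W hw hx) subrr //.
Qed.

End Main.
Section Main2.
Variables (n' : nat) (M : 'M[CC]_n'.+1 -> Prop) (Delta : 'M[CC]_n'.+1 -> 'M[CC]_(n'.+1 * n'.+1))
  (S : 'M[CC]_n'.+1 -> 'M[CC]_n'.+1) (eps : 'M[CC]_n'.+1 -> CC) (p : 'M[CC]_n'.+1).
Hypothesis W : weak_kac M Delta S eps.
Hypothesis Hp : is_support M eps p.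
Local Notation MM := 'M[CC]_n'.+1.
Local Notation e := (Delta 1%:M).
Local Notation es := (eps_s Delta S).
Local Notation et := (eps_t Delta S).

Lemma Sp : S p = p.
Proof.
have Mp := Mp Hp.
have hq : is_proj M (S p).
  split; first exact: (MS W).
  - by rewrite -(wk_S_antimul W Mp Mp) (pp Hp).
  - by rewrite -(wk_S_star W Mp) (pstar Hp).
have he : eps (1%:M - S p) = 0.
  rewrite -(wk_S_unital W) -(linPB (Slin W)) (wk_eps_S W); last by apply: (MB W) => //; exact: (M1 W).
  by case: Hp.
have h1 : p *m S p = p by case: Hp => _ _ /(_ _ hq he).
have h2 : S (p *m S p) = p *m S p by rewrite (wk_S_antimul W Mp (MS W Mp)) (wk_S_invol W Mp).
by rewrite -{1}h1 h2 h1.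
Qed.

Lemma DeltaS y k (c d : 'I_k -> MM) : M y -> Delta y = \sum_(r < k) c r *t d r ->
  Delta (S y) = \sum_(r < k) S (d r) *t S (c r).
Proof.
move=> hy hD.
have [k' [c' [d' [hcd' hD']]]] := repr W (MS W hy).
move: (congr1 (@tflip _) (wk_S_Delta W hy)).
rewrite hD hD' /tflip /tmap !tbil_sum //; try (apply: bil_tmap; exact: Slin W);
  try exact: bil_flip.
Qed.

Lemma ESstar x : M x -> mxstar (es x) = es (mxstar (S x)).
Proof.
move=> hx.
have [k [c [d [hcd hD]]]] := repr W hx.
have hDS := DeltaS hx hD.
have hD2 : Delta (mxstar (S x)) = \sum_(r < k) S (mxstar (d r)) *t S (mxstar (c r)).
  rewrite (wk_Delta_star W (MS W hx)) hDS mxstar_sum; apply: eq_bigr => r _.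
  by case: (hcd r) => hc hd; rewrite mxstar_tens -(wk_S_star W hc) -(wk_S_star W hd).
rewrite (es_sum W hx hD) (es_sum W (Mstar W (MS W hx)) hD2) mxstar_sum.
apply: eq_bigr => r _; case: (hcd r) => hc hd.
by rewrite mxstarM (wk_S_invol W (Mstar W hd)) (wk_S_star W hc).
Qed.

End Main2.
Section Main3.
Variables (n' : nat) (M : 'M[CC]_n'.+1 -> Prop) (Delta : 'M[CC]_n'.+1 -> 'M[CC]_(n'.+1 * n'.+1))
  (S : 'M[CC]_n'.+1 -> 'M[CC]_n'.+1) (eps : 'M[CC]_n'.+1 -> CC) (p : 'M[CC]_n'.+1).
Hypothesis W : weak_kac M Delta S eps.
Hypothesis Hp : is_support M eps p.
Local Notation MM := 'M[CC]_n'.+1.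
Local Notation e := (Delta 1%:M).
Local Notation es := (eps_s Delta S).
Local Notation et := (eps_t Delta S).

Lemma Q0 : Qs M Delta 0.
Proof. by have := Qlin W (-1) (Q1 W) (Q1 W); rewrite scaleN1r addNr. Qed.

Lemma hornerQ h q : Qs M Delta h -> Qs M Delta (horner_mx h q).
Proof.
apply: horner_in; [exact: Q0 | exact: Q1 W | exact: Qlin W | exact: Qmul W].
Qed.

Lemma faithful v : Qs M Delta v -> eps (v *m mxstar v) = 0 -> v = 0.
Proof.
move=> Qv hvv.
set g := gg Delta S.
have Qg : Qs M Delta g := Qg W.
have gh : mxstar g = g := g_herm W.
have gpsd := g_psd W.
have [q [r [CC2 Cst hC e1]]] := HD gh.
set C := horner_mx g q in CC2 Cst hC e1.
set R := horner_mx g r in e1.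
have QC : Qs M Delta C := hornerQ q Qg.
have QR : Qs M Delta R := hornerQ r Qg.
have C0 : C = 0.
  apply: trBBs_eq0; rewrite Cst CC2 (Q5 W QC) hC.
  by rewrite (linS0 (elin W)).
have Rg : R *m g = 1%:M by rewrite -e1 C0 subr0.
have gR : g *m R = 1%:M.
  have : comm_mx R g by apply: comm_horner_mx.
  by rewrite /comm_mx => <-.
have Rst : mxstar R = R.
  have h1 : mxstar R *m g = 1%:M by rewrite -{1}gh -mxstarM gR mxstar1.
  by rewrite -[LHS]mulmx1 -gR mulmxA h1 mul1mx.
have Rpsd xi : 0 <= qf R xi.
  have -> : qf R xi = qf g (R *m xi).
    by rewrite /qf -(cst_herm _ Rst) -!mulmxA (mulmxA g) gR mul1mx.
  exact: gpsd.
have trv : \tr (mxstar v *m R *m v) = 0.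
  rewrite -mulmxA mxtrace_mulC -mulmxA (Q5 W); last first.
    apply: (Qmul W QR); apply: (Qmul W Qv); exact: (Qstar W).
  by rewrite !mulmxA gR mul1mx.
move: trv; rewrite tr_qf => /eqP; rewrite psumr_eq0 // => /allP H.
apply/matrixP => i j.
have Hj := H j (mem_index_enum _); rewrite implyTb in Hj.
have hc : R *m col j v = 0 by apply: PZ => //; exact/eqP.
have : col j v = 0 by rewrite -[col j v]mul1mx -gR -mulmxA hc mulmx0.
move=> hcol; have := congr1 (fun X : 'cV[CC]_n'.+1 => X i 0) hcol.
by rewrite /= !mxE.
Qed.

End Main3.
Lemma mxstarB m (A B : 'M[CC]_m) : mxstar (A - B) = mxstar A - mxstar B.
Proof. by apply/matrixP => i j; rewrite !mxE rmorphB. Qed.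

Section Main4.
Variables (n' : nat) (M : 'M[CC]_n'.+1 -> Prop) (Delta : 'M[CC]_n'.+1 -> 'M[CC]_(n'.+1 * n'.+1))
  (S : 'M[CC]_n'.+1 -> 'M[CC]_n'.+1) (eps : 'M[CC]_n'.+1 -> CC) (p : 'M[CC]_n'.+1).
Hypothesis W : weak_kac M Delta S eps.
Hypothesis Hp : is_support M eps p.
Local Notation MM := 'M[CC]_n'.+1.
Local Notation es := (eps_s Delta S).
Local Notation et := (eps_t Delta S).

Lemma M1p : M (1%:M - p). Proof. exact: (MB W (M1 W) (Mp Hp)). Qed.

Lemma S1p : S (1%:M - p) = 1%:M - p.
Proof. by rewrite (linPB (Slin W)) (wk_S_unital W) (Sp W Hp). Qed.

Lemma vzero : es (1%:M - p) = 0.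
Proof.
have Mv : M (es (1%:M - p)) := Mes W M1p.
have vst : mxstar (es (1%:M - p)) = es (1%:M - p).
  by rewrite (ESstar W M1p) S1p mxstarB mxstar1 (pstar Hp).
have pv : p *m es (1%:M - p) = 0.
  by rewrite -(Ps W Hp M1p) mulmxBr mulmx1 (pp Hp) subrr.
apply: (faithful W (Qes W M1p)).
rewrite vst (I4 W M1p Mv) mulmxBl mul1mx pv subr0.
rewrite -[es _]mulmx1 (I4 W M1p (M1 W)) mulmx1.
by case: Hp.
Qed.

Lemma uzero : et (1%:M - p) = 0.
Proof. by rewrite (ET W M1p) S1p vzero (linP0 (Slin W)). Qed.

Lemma main y : (in_Is M Delta S y /\ in_It M Delta S y) <-> (M y /\ y = p *m y *m p).
Proof.
split.
- case=> [[hy Hs] [_ Ht]]; split => //.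
  have h1 : y *m (1%:M - p) = 0 by rewrite (Hs _ M1p) vzero mulmx0.
  have h2 : (1%:M - p) *m y = 0 by rewrite (Ht _ M1p) uzero mul0mx.
  have e1 : y = y *m p.
    by move: h1; rewrite mulmxBr mulmx1 => /eqP; rewrite subr_eq0 => /eqP.
  have e2 : y = p *m y.
    by move: h2; rewrite mulmxBl mul1mx => /eqP; rewrite subr_eq0 => /eqP.
  by rewrite -mulmxA -e1 -e2.
- case=> hy hyp; split; split => // x hx.
  + by rewrite hyp -!mulmxA (Ps W Hp hx).
  + by rewrite hyp !mulmxA (Pt W Hp hx).
Qed.

End Main4.

Unset Implicit Arguments.
Theorem proposition2p2p4 (n : nat) (M : 'M[CC]_n -> Prop)
    (Delta : 'M[CC]_n -> 'M[CC]_(n * n)) (S : 'M[CC]_n -> 'M[CC]_n)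
    (eps : 'M[CC]_n -> CC) (p : 'M[CC]_n) :
  weak_kac M Delta S eps -> is_support M eps p ->
  forall y : 'M[CC]_n,
    (in_Is M Delta S y /\ in_It M Delta S y) <-> (M y /\ y = p *m y *m p).
Proof.
case: n M Delta S eps p => [|n'] M Delta S eps p W Hp y; last exact: (main W Hp y).
have E (A B : 'M[CC]_0) : A = B by apply/matrixP => [[]].
split.
- by case=> [[hy _] _]; split => //; apply: E.
- case=> hy _; split; split => // x hx; exact: E.
Qed.
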